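(* Let $F:\mathbb{R}^n\rightrightarrows\mathbb{R}^n$ be a set-valued map, consider the differential inclusion $\dot x\in F(x)$, $x\in\mathbb{R}^n$, and let $X_o,X_u\subset\mathbb{R}^n$. If there exists a lower semicontinuous time-varying barrier function candidate $B:\mathbb{R}_{\geq 0}\times\mathbb{R}^n\to\mathbb{R}$ for safety with respect to $(X_o,X_u)$ that satisfies property $(\star\star)$, then the system $\dot x\in F(x)$ is safe with respect to $(X_o,X_u)$.
   Context: A solution of $\dot x\in F(x)$ starting from $x_o$ is a locally absolutely continuous function $\phi:\operatorname{dom}\phi\to\mathbb{R}^n$, where $\operatorname{dom}\phi$ is $[0,T]$ or $[0,T)$ for some $T\in[0,\infty]$, with $\phi(0)=x_o$ and $\dot\phi(t)\in F(\phi(t))$ for almost all $t\in\operatorname{dom}\phi$. The system is safe with respect to $(X_o,X_u)$ if every solution $\phi$ starting from any $x_o\in X_o$ satisfies $\phi(t)\notin X_u$ for all $t\in\operatorname{dom}\phi$. A time-varying barrier function candidate for safety with respect to $(X_o,X_u)$ is a function $B:\mathbb{R}_{\geq0}\times\mathbb{R}^n\to\mathbb{R}$ with $B(t,x)>0$ for all $(t,x)\in\mathbb{R}_{\geq0}\times X_u$ and $B(t,x)\le 0$ for all $(t,x)\in\mathbb{R}_{\geq0}\times X_o$. Let $K:=\{(t,x)\in\mathbb{R}_{\geq0}\times\mathbb{R}^n: B(t,x)\le 0\}$, with interior $\operatorname{int}(K)$ taken in $\mathbb{R}_{\geq0}\times\mathbb{R}^n$. Property $(\star\star)$: there is an open neighborhood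 $U(K)$ of $K$ such that, along each solution of $\dot x\in F(x)$ considered in the extended time–state space (i.e., along each solution of $(\dot t,\dot x)\in\{1\}\times F(x)$) starting from a point of $U(K)\setminus\operatorname{int}(K)$ and remaining in $U(K)\setminus\operatorname{int}(K)$ on a time interval, the map $t\mapsto B(t,\phi(t))$ is nonincreasing on that interval. *)

(* Defs.v *)
From HB Require Import structures.
From mathcomp Require Import all_boot all_order all_algebra.
From mathcomp Require Import all_classical all_reals all_analysis.
Set Implicit Arguments. Unset Strict Implicit. Unset Printing Implicit Defensive.
Import Order.TTheory GRing.Theory Num.Theory.
Import numFieldNormedType.Exports.
Local Open Scope classical_set_scope.
Local Open Scope ring_scope.

Section Defs.
Variables (R : realType) (n : nat).
Notation V := 'rV[R]_n.

Definition abs_cont_on (f : R -> V) (a b : R) : Prop :=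
  forall eps : R, 0 < eps -> exists2 delta : R, 0 < delta &
    forall (k : nat) (u v : nat -> R),
      (forall i, (i < k)%N -> a <= u i /\ u i <= v i /\ v i <= b) ->
      (forall i j, (i < k)%N -> (j < k)%N -> i <> j -> v i <= u j \/ v j <= u i) ->
      \sum_(i < k) (v i - u i) < delta ->
      \sum_(i < k) `| f (v i) - f (u i) | < eps.

Definition loc_abs_cont (f : R -> V) (D : set R) : Prop :=
  forall a b, a <= b -> [set` `[a, b]] `<=` D -> abs_cont_on f a b.

Definition sol_domain (D : set R) : Prop :=
  (exists T : R, 0 <= T /\ (D = [set` `[0, T]] \/ D = [set` `[0, T[])) \/ D = [set` `[0, +oo[].

(* phi : dom -> R^n is a solution of xdot in F(x) starting from x0;
   phi is given as a total function, only its values on dom matter. *)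
Definition is_solution (F : V -> set V) (x0 : V) (phi : R -> V) (dom : set R)
  : Prop :=
  [/\ sol_domain dom, loc_abs_cont phi dom, phi 0 = x0 &
      exists N : set R, (@lebesgue_measure R).-negligible N /\
        forall t, dom t -> ~ N t -> derivable phi t 1 /\ F (phi t) ('D_1 phi t)].

Definition safe (F : V -> set V) (Xo Xu : set V) : Prop :=
  forall x0 phi dom, Xo x0 -> is_solution F x0 phi dom ->
    forall t, dom t -> ~ Xu (phi t).

Definition barrier_candidate (B : R -> V -> R) (Xo Xu : set V) : Prop :=
  (forall t x, 0 <= t -> Xu x -> 0 < B t x) /\
  (forall t x, 0 <= t -> Xo x -> B t x <= 0).

(* the ambient space R_{>=0} x R^n (subset of R x R^n, subspace topology) *)
Definition Hspace : set (R * V) := [set p | 0 <= p.1].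

Definition lsc_on_H (B : R -> V -> R) : Prop :=
  forall p : R * V, Hspace p -> forall a : R, a < B p.1 p.2 ->
    exists2 W : set (R * V), nbhs p W &
      forall q, W q -> Hspace q -> a < B q.1 q.2.

Definition Kset (B : R -> V -> R) : set (R * V) :=
  [set p | Hspace p /\ B p.1 p.2 <= 0].

Definition rel_interior (A : set (R * V)) : set (R * V) :=
  [set p | A p /\ Hspace p /\
           exists2 W : set (R * V), nbhs p W & W `&` Hspace `<=` A].

Definition rel_open (U : set (R * V)) : Prop :=
  exists2 O : set (R * V), open O & U = O `&` Hspace.

Definition property_star_star (F : V -> set V) (B : R -> V -> R) : Prop :=
  exists2 U : set (R * V), rel_open U & (Kset B `<=` U /\
    forall (t0 : R) (x0 : V) (phi : R -> V) (dom : set R),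
      (U `\` rel_interior (Kset B)) (t0, x0) ->
      is_solution F x0 phi dom ->
      forall s1 : R, 0 <= s1 -> [set` `[0, s1]] `<=` dom ->
        (forall s, 0 <= s <= s1 ->
           (U `\` rel_interior (Kset B)) (t0 + s, phi s)) ->
        forall s s', 0 <= s -> s <= s' -> s' <= s1 ->
          B (t0 + s') (phi s') <= B (t0 + s) (phi s)).

End Defs.

(* Main.v *)
Require Import Defs.
From HB Require Import structures.
From mathcomp Require Import all_boot all_order all_algebra.
From mathcomp Require Import all_classical all_reals all_analysis.
From mathcomp Require Import measurable_realfun ring lra.
Import Order.TTheory GRing.Theory Num.Theory.
Import numFieldNormedType.Exports.
Set Implicit Arguments. Unset Strict Implicit.
Local Open Scope classical_set_scope.
Local Open Scope ring_scope.

Lemma shift_mf (R : realType) (c : R) : measurable_fun [set: R] (fun s : R => c + s).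
Proof. by apply: measurable_funD => //; exact: measurable_cst. Qed.

Definition shiftmeas (R : realType) (c : R) : set (measurableTypeR R) -> \bar R :=
  fun A => lebesgue_measure ((fun s : R => c + s) @^-1` A).

Lemma shiftmeas0 (R : realType) (c : R) : shiftmeas c set0 = 0%E.
Proof. by rewrite /shiftmeas preimage_set0 measure0. Qed.

Lemma shiftmeas_ge0 (R : realType) (c : R) A : (0 <= shiftmeas c A)%E.
Proof. by apply: measure_ge0; rewrite -[X in measurable X]setIT; apply: shift_mf. Qed.

Lemma shiftmeas_sigma_additive (R : realType) (c : R) : semi_sigma_additive (shiftmeas c).
Proof.
move=> F mF tF mUF; rewrite /shiftmeas preimage_bigcup.
apply: measure_semi_sigma_additive.
- by move=> n; rewrite -[X in measurable X]setTI; apply: shift_mf => //; exact: mF.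
- apply/trivIsetP => /= i j _ _ ij; rewrite -preimage_setI.
  by move/trivIsetP : tF => /(_ _ _ _ _ ij) ->//; rewrite preimage_set0.
- by rewrite -preimage_bigcup -[X in measurable X]setTI; apply: shift_mf.
Qed.

HB.instance Definition _ (R : realType) (c : R) := isMeasure.Build _ _ _
  (shiftmeas c) (@shiftmeas0 R c) (@shiftmeas_ge0 R c) (@shiftmeas_sigma_additive R c).

Lemma negligible_shift (R : realType) (c : R) (N : set R) :
  (@lebesgue_measure R).-negligible N ->
  (@lebesgue_measure R).-negligible [set s | N (c + s)].
Proof.
move=> [A [mA A0 NA]].
exists ((fun s => c + s) @^-1` A); split.
- by rewrite -[X in measurable X]setTI; apply: shift_mf.
- have := @lebesgue_measure_unique R (shiftmeas c) _ A mA.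
  rewrite A0 => H; rewrite -[LHS]/(shiftmeas c A) -H //. 
  move=> X [[x y] _ <-].
  change (lebesgue_measure `]x, y]%classic = lebesgue_measure ((fun s : R => c + s) @^-1` `]x, y]%classic)).
  have -> : (fun s : R => c + s) @^-1` `]x, y]%classic = `](x - c), (y - c)]%classic.
    apply/seteqP; split => s /=; rewrite !in_itv /= => /andP[h1 h2]; apply/andP; split.
    - by rewrite ltrBlDl.
    - by rewrite lerBrDl.
    - by rewrite -ltrBlDl.
    - by rewrite -lerBrDl.
  rewrite !lebesgue_measure_itv /= !lte_fin ltrD2r; case: ifP => // _.
  by rewrite -!EFinB; congr (_%:E); ring.
- by move=> s /= Ns; apply: NA.
Qed.

Lemma shift_fun_eq (R : realType) n (f : R -> 'rV[R]_n) (c x : R) :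
  (fun h : R => h^-1 *: (((fun s => f (c + s)) \o shift x) (h *: (1:R)) - (fun s => f (c + s)) x)) =
  (fun h : R => h^-1 *: ((f \o shift (c + x)) (h *: (1:R)) - f (c + x))).
Proof. by apply/funext => h /=; rewrite addrCA. Qed.

Lemma derivable_shift (R : realType) n (f : R -> 'rV[R]_n) (c x : R) :
  derivable f (c + x) 1 -> derivable (fun s => f (c + s)) x 1.
Proof. by rewrite /derivable shift_fun_eq. Qed.

Lemma derive_shift (R : realType) n (f : R -> 'rV[R]_n) (c x : R) :
  'D_1 (fun s => f (c + s)) x = 'D_1 f (c + x).
Proof. by rewrite /derive shift_fun_eq. Qed.

Lemma dom_int (R : realType) (dom : set R) t : sol_domain dom -> dom t ->
  0 <= t /\ (forall s, 0 <= s <= t -> dom s).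
Proof.
move=> [[T [T0 [->|->]]]|->] /=; rewrite !in_itv /= ?andbT.
- move=> /andP[t0 tT]; split => // s /andP[s0 st]; rewrite /= in_itv /= s0 /=.
  exact: le_trans st tT.
- move=> /andP[t0 tT]; split => // s /andP[s0 st]; rewrite /= in_itv /= s0 /=.
  exact: le_lt_trans st tT.
- by move=> t0; split => // s /andP[s0 st]; rewrite /= in_itv /= s0.
Qed.

Lemma ac_cont (R : realType) n (f : R -> 'rV[R]_n) a b : abs_cont_on f a b ->
  forall s, a <= s <= b -> forall e, 0 < e -> exists2 d, 0 < d &
   forall s', a <= s' <= b -> `|s' - s| < d -> `|f s' - f s| < e.
Proof.
move=> ac s /andP[a_s sb] e e0; have [d d0 H] := ac e e0; exists d => // s' /andP[as' s'b] ss'.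
have key : forall u v, a <= u -> u <= v -> v <= b -> v - u < d -> `|f v - f u| < e.
  move=> u v au uv vb vud.
  have := H 1%N (fun _ => u) (fun _ => v).
  rewrite !big_ord1; apply => //.
  move=> i j hi hj hij; exfalso; apply: hij; move: hi hj.
  by rewrite !ltnS !leqn0 => /eqP -> /eqP ->.
case: (leP s s') => h.
- apply: key => //; by rewrite ger0_norm ?subr_ge0 // in ss'.
- rewrite distrC; apply: key => //; first exact: ltW.
  by rewrite distrC ger0_norm ?subr_ge0 // ltW in ss'.
Qed.

Lemma near_traj (R : realType) n (phi : R -> 'rV[R]_n) (t1 tau : R) (W : set (R * 'rV[R]_n)) :
  abs_cont_on phi 0 t1 -> 0 <= tau <= t1 -> nbhs (tau, phi tau) W ->
  exists2 d, 0 < d & forall s, 0 <= s <= t1 -> `|s - tau| < d -> W (s, phi s).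
Proof.
move=> ac htau /nbhs_ballP [e e0 H].
have [d d0 Hd] := ac_cont ac htau e0.
exists (Num.min e d); first by rewrite lt_min e0 d0.
move=> s hs; rewrite lt_min => /andP[h1 h2].
apply: H; rewrite /ball /= /prod_ball /= -!ball_normE /ball_ /=; split.
- by rewrite distrC.
- by rewrite distrC; apply: Hd.
Qed.

Theorem theorem1 (R : realType) (n : nat) (F : 'rV[R]_n -> set 'rV[R]_n)
    (Xo Xu : set 'rV[R]_n) :
  (exists B : R -> 'rV[R]_n -> R,
     [/\ lsc_on_H B, barrier_candidate B Xo Xu & property_star_star F B]) ->
  safe F Xo Xu.
Proof.
move=> [B [lsc bc pss]] x0 phi dom Xox0 sol t1 domt1 Xut1.
have [bc1 bc2] := bc.
have [U [Op oO UE] [KU ss]] := pss.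
have [sd lac phi0 [N [negN derN]]] := sol.
have [t10 subd] := dom_int sd domt1.
have Bt1 : 0 < B t1 (phi t1) by apply: bc1.
have B0 : B 0 (phi 0) <= 0 by rewrite phi0; apply: bc2.
have ac : abs_cont_on phi 0 t1.
  by apply: lac => // s /=; rewrite in_itv /=; exact: subd.
pose S := [set s | 0 <= s <= t1 /\ B s (phi s) <= 0].
have S0 : S 0 by split => //; rewrite lexx t10.
have hsup : has_sup S.
  split; first by exists 0.
  by exists t1 => s [/andP[_ ?] _].
pose tau := sup S.
have tau0 : 0 <= tau := sup_upper_bound hsup S0.
have taut1 : tau <= t1 by apply: ge_sup; [exists 0 | move=> s [/andP[_ ?] _]].
have htau : 0 <= tau <= t1 by rewrite tau0 taut1.
have Btau : B tau (phi tau) <= 0.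
  rewrite leNgt; apply/negP => Bpos.
  have [W nW HW] := lsc (tau, phi tau) tau0 0 Bpos.
  have [d d0 Hd] := near_traj ac htau nW.
  have [s Ss lts] := sup_adherent d0 hsup.
  have stau : s <= tau := sup_upper_bound hsup Ss.
  case: Ss => /andP[s0 st1] Bs.
  have : 0 < B s (phi s).
    apply: (HW (s, phi s)) => //; apply: Hd; first by rewrite s0 st1.
    rewrite distrC ger0_norm ?subr_ge0 //; rewrite -/tau in lts; lra.
  by rewrite ltNge Bs.
have taut1' : tau < t1.
  rewrite lt_neqAle taut1 andbT; apply/eqP => e; move: Btau; rewrite e leNgt Bt1.
  by [].
have notint : ~ rel_interior (Kset B) (tau, phi tau).
  move=> [_ [_ [W nW HW]]].
  have [d d0 Hd] := near_traj ac htau nW.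
  pose s := Num.min (tau + d / 2) t1.
  have h1 : s <= tau + d / 2 by rewrite /s ge_min lexx.
  have h2 : s <= t1 by rewrite /s ge_min lexx orbT.
  have h3 : tau < s by rewrite /s lt_min taut1' andbT; lra.
  have : S s.
    have hs : 0 <= s <= t1 by apply/andP; split => //; lra.
    split => //.
    have [] := HW (s, phi s) => //; split.
      apply: Hd => //; rewrite ger0_norm; lra.
    rewrite /Hspace /=; lra.
  move/(sup_upper_bound hsup); rewrite -/tau; lra.
have Utau : U (tau, phi tau) by apply: KU; split.
have Otau : Op (tau, phi tau) by move: Utau; rewrite UE => -[].
have [d3 d30 Hd3] := near_traj ac htau (oO _ Otau).
pose del := Num.min (d3 / 2) (t1 - tau).
have del0 : 0 < del by rewrite /del lt_min; apply/andP; split; lra.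
have del1 : del <= d3 / 2 by rewrite /del ge_min lexx.
have del2 : del <= t1 - tau by rewrite /del ge_min lexx orbT.
pose psi := fun s => phi (tau + s).
pose dom' := [set` `[0, del]] : set R.
have sol' : is_solution F (phi tau) psi dom'.
  split.
  - by left; exists del; split; [exact: ltW | left].
  - move=> a b ab sub.
    have a0 : 0 <= a.
      by have := sub a; rewrite /= !in_itv /= lexx ab => /(_ isT) /andP[].
    have bd : b <= del.
      by have := sub b; rewrite /= !in_itv /= lexx ab => /(_ isT) /andP[].
    have acp : abs_cont_on phi (tau + a) (tau + b).
      apply: lac; first by rewrite lerD2l.
      move=> s /=; rewrite in_itv /= => /andP[s1 s2]; apply: subd.
      apply/andP; split; lra.
    move=> e e0; have [dl dl0 Hl] := acp e e0; exists dl => // k u v h1 h2 h3.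
    apply: (Hl k (fun i => tau + u i) (fun i => tau + v i)).
    + move=> i ik; have [? [? ?]] := h1 i ik; split; [|split]; by rewrite lerD2l.
    + move=> i j ik jk ij; case: (h2 i j ik jk ij) => h; [left|right]; by rewrite lerD2l.
    + suff -> : \sum_(i < k) (tau + v i - (tau + u i)) = \sum_(i < k) (v i - u i) by [].
      by apply: eq_bigr => i _; ring.
  - by rewrite /psi addr0.
  - exists [set s | N (tau + s)]; split; first exact: negligible_shift.
    move=> s doms Ns.
    have hs : 0 <= s <= del by move: doms; rewrite /dom' /= in_itv.
    have dtau : dom (tau + s) by apply: subd; apply/andP; split; lra.
    have [dv Fd] := derN _ dtau Ns.
    split; first exact: derivable_shift.
    by rewrite /psi derive_shift.
have Hall : forall s, 0 <= s <= del -> (U `\` rel_interior (Kset B)) (tau + s, psi s).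
  move=> s /andP[s0 sdl]; have hs : 0 <= tau + s <= t1 by apply/andP; split; lra.
  split.
    rewrite UE; split; last by rewrite /Hspace /=; lra.
    apply: Hd3 => //; rewrite addrC addKr ger0_norm //; lra.
  case: (ltrP 0 s) => sp.
    move=> [[_ Ble] _].
    have : S (tau + s) by split.
    move/(sup_upper_bound hsup); rewrite -/tau; lra.
  have -> : s = 0 by apply/eqP; rewrite eq_le sp s0.
  by rewrite /psi addr0.
have HU : (U `\` rel_interior (Kset B)) (tau, phi tau).
  by have := Hall 0; rewrite lexx ltW //= /psi addr0; apply.
have key := ss tau (phi tau) psi dom' HU sol' del (ltW del0) (fun x hx => hx) Hall 0 del (lexx 0) (ltW del0) (lexx del).
rewrite /psi addr0 in key.
have : S (tau + del).
  split; first by apply/andP; split; lra.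
  exact: le_trans key Btau.
move/(sup_upper_bound hsup); rewrite -/tau; lra.
Qed.
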